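(* Let $X\subseteq\mathbb{C}^n$ be a complex analytic set, $x\in X$, $\mathcal M\subseteq\mathcal O_{X,x}^p$ a submodule and $k\in\mathbb N$. Then, at $(x,x)$: (a) $I_\Delta^{k}\,J_2\big((J_k(\mathcal M))_D\big)\subseteq J_{2k}(\mathcal M_D)$; (b) if $J_k(\mathcal M)$ is a principal ideal, then $I_\Delta^{k-1}\,J_2\big((J_k(\mathcal M))_D\big)\subseteq J_{2k}(\mathcal M_D)$.
   Context: $z_1,\dots,z_n$ are coordinates on $\mathbb C^n$; $\pi_1,\pi_2:X\times X\to X$ are the projections, and $I_\Delta=(z_1\circ\pi_1-z_1\circ\pi_2,\dots,z_n\circ\pi_1-z_n\circ\pi_2)$ is the ideal of the diagonal in $\mathcal O_{X\times X}$. For $h\in\mathcal O_X^q$, $h_D=(h\circ\pi_1,h\circ\pi_2)\in\mathcal O^{2q}_{X\times X}$; for a submodule or ideal $N\subseteq\mathcal O_X^q$, $N_D$ is the submodule of $\mathcal O^{2q}_{X\times X}$ generated by $\{h_D:h\in N\}$. $J_m(N)$ is the ideal generated by the $m\times m$ minors of a matrix of generators of $N$ (so $J_k(\mathcal M)$ is an ideal of $\mathcal O_X$, $(J_k(\mathcal M))_D\subseteq\mathcal O^2_{X\times X}$, and $J_2$ of it is an ideal). *)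

(* Defs.v *)
From HB Require Import structures.
From mathcomp Require Import all_boot all_order all_algebra.
From mathcomp Require Import all_classical all_reals all_analysis.
From mathcomp Require Import complex.
Set Implicit Arguments. Unset Strict Implicit. Unset Printing Implicit Defensive.
Import Order.TTheory GRing.Theory Num.Theory.
Import numFieldNormedType.Exports.
Local Open Scope ring_scope.
Local Open Scope classical_set_scope.

Section Germs.
Variable R : realType.
Local Notation C := R[i].
Variable E : normedModType C.

Definition holo_germ (y : E) (f : E -> C) : Prop :=
  \forall z \near y, differentiable (f : E -> C^o) z.

Definition germ_eq (Y : set E) (y : E) (f g : E -> C) : Prop :=
  \forall z \near y, Y z -> f z = g z.

(* The ideal of O_{Y,y} generated by S, as the set of (representatives of)
   germs of holomorphic functions which on Y near y agree with a finite
   O-linear combination of elements of S. *)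
Definition ideal_gen (Y : set E) (y : E) (S : set (E -> C)) : set (E -> C) :=
  fun f => holo_germ y f /\
    exists (m : nat) (a s : 'I_m -> E -> C),
      (forall j, holo_germ y (a j)) /\ (forall j, S (s j)) /\
      germ_eq Y y f (fun z => \sum_(j < m) a j z * s j z).

Definition ideal_mul (Y : set E) (y : E) (I J : set (E -> C)) : set (E -> C) :=
  ideal_gen Y y [set h | exists f g, I f /\ J g /\ h = (fun z => f z * g z)].

Definition ideal_pow (Y : set E) (y : E) (I : set (E -> C)) (k : nat) :
    set (E -> C) :=
  iter k (ideal_mul Y y I) (ideal_gen Y y [set (fun _ => 1)]).

Definition principal_ideal (Y : set E) (y : E) (I : set (E -> C)) : Prop :=
  exists g, holo_germ y g /\ I = ideal_gen Y y [set g].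

(* Elements of O_{Y,y}^q are represented by q-tuples of functions. *)
Definition submodule (Y : set E) (y : E) (q : nat)
    (M : set ('I_q -> E -> C)) : Prop :=
  [/\ forall h, M h -> forall i, holo_germ y (h i),
      M (fun _ _ => 0),
      forall h h', M h -> M h' -> M (fun i z => h i z + h' i z),
      forall a h, holo_germ y a -> M h -> M (fun i z => a z * h i z) &
      forall h h', (forall i, holo_germ y (h' i)) ->
        (forall i, germ_eq Y y (h i) (h' i)) -> M h -> M h'].

(* J_m(N): the ideal generated by the m x m minors of the (possibly infinite)
   matrix whose columns are the generators S of N: an m x m minor is the
   determinant of the submatrix given by m distinct rows and m columns
   taken from S. *)
Definition Jminors (Y : set E) (y : E) (q m : nat)
    (S : set ('I_q -> E -> C)) : set (E -> C) :=
  ideal_gen Y y [set d | exists (r : 'I_m -> 'I_q) (c : 'I_m -> 'I_q -> E -> C),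
      [/\ injective r, forall j, S (c j) &
          d = (fun z => \det (\matrix_(i, j) c j (r i) z))]].
End Germs.

Section Doubling.
Variable R : realType.
Local Notation C := R[i].
Variable V : normedModType C.

(* h_D = (h o pi_1, h o pi_2) *)
Definition double (q : nat) (h : 'I_q -> V -> C) : 'I_(q + q) -> (V * V)%type -> C :=
  fun i w => match fintype.split i with inl i1 => h i1 w.1 | inr i2 => h i2 w.2 end.

(* generating set of N_D *)
Definition doubled (q : nat) (N : set ('I_q -> V -> C)) :
    set ('I_(q + q) -> (V * V)%type -> C) := [set double h | h in N].

(* generating set of I_D for an ideal I of O_X (vectors of length 1) *)
Definition doubled_ideal (I : set (V -> C)) :
    set ('I_(1 + 1) -> (V * V)%type -> C) :=
  [set double (fun _ : 'I_1 => g) | g in I].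
End Doubling.

Section Analytic.
Variable R : realType.
Local Notation C := R[i].

Definition analytic_set (n : nat) (X : set 'rV[C]_n) : Prop :=
  forall a, X a -> exists (m : nat) (g : 'I_m -> 'rV[C]_n -> C),
    (forall j, @holo_germ R ('rV[C]_n : normedModType C) a (g j)) /\
    \forall z \near (a : ('rV[C]_n : normedModType C)), (X z <-> forall j, g j z = 0).

Definition setXX (n : nat) (X : set 'rV[C]_n) : set ('rV[C]_n * 'rV[C]_n)%type :=
  [set w | X w.1 /\ X w.2].

Definition I_Delta (n : nat) (X : set 'rV[C]_n) (x : 'rV[C]_n) :
    set (('rV[C]_n * 'rV[C]_n)%type -> C) :=
  @ideal_gen R (('rV[C]_n * 'rV[C]_n)%type : normedModType C) (setXX X) (x, x)
    [set (fun w : ('rV[C]_n * 'rV[C]_n)%type => w.1 ord0 i - w.2 ord0 i) | i in [set: 'I_n]].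
End Analytic.

(* Main.v *)
Require Import Defs.
From HB Require Import structures.
From mathcomp Require Import all_boot all_order all_algebra.
From mathcomp Require Import all_classical all_reals all_analysis.
From mathcomp Require Import complex.
From mathcomp Require Import fingroup perm.
From mathcomp Require Import ring.
Set Implicit Arguments. Unset Strict Implicit. Unset Printing Implicit Defensive.
Import Order.TTheory GRing.Theory Num.Theory.
Import numFieldNormedType.Exports.
Local Open Scope ring_scope.
Local Open Scope classical_set_scope.
Lemma splitL m n (j : 'I_m) : fintype.split (lshift n j) = inl j.
Proof. exact: (unsplitK (inl _ j)). Qed.
Lemma splitR m n (j : 'I_n) : fintype.split (rshift m j) = inr j.
Proof. exact: (unsplitK (inr _ j)). Qed.

Lemma filterS4 (T : Type) (F : set_system T) {FF : Filter F} (P Q R S U : set T) :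
  (forall x, P x -> Q x -> R x -> S x -> U x) -> F P -> F Q -> F R -> F S -> F U.
Proof.
move=> h fP fQ fR fS; near=> z; apply: h; by near: z.
Unshelve. all: by end_near. Qed.
Section Gen.
Variable R : realType.
Local Notation C := R[i].
Variable E : normedModType C.

Section Holo.
Variable y : E.
Local Notation holo := (@holo_germ R E y).

Lemma holo_cst (c : C) : holo (fun _ => c).
Proof. near=> z; exact: (@differentiable_cst _ _ (C^o)). Unshelve. all: by end_near. Qed.

Lemma holo_add f g : holo f -> holo g -> holo (fun z => f z + g z).
Proof. move=> hf hg; near=> z.
apply: (@differentiableD _ _ _ (f : E -> C^o) g); by [near: z].
Unshelve. all: by end_near. Qed.

Lemma holo_opp f : holo f -> holo (fun z => - f z).
Proof. move=> hf; near=> z.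
apply: (@differentiableN _ _ _ (f : E -> C^o)); by [near: z].
Unshelve. all: by end_near. Qed.

Lemma holo_mul f g : holo f -> holo g -> holo (fun z => f z * g z).
Proof. move=> hf hg; near=> z.
apply: (@differentiableM _ _ (f : E -> C^o) g); by [near: z].
Unshelve. all: by end_near. Qed.

Lemma holo_sub f g : holo f -> holo g -> holo (fun z => f z - g z).
Proof. by move=> hf hg; apply: holo_add => //; apply: holo_opp. Qed.

Lemma holo_sum (I : Type) (s : seq I) (F : I -> E -> C) :
  (forall i, holo (F i)) -> holo (fun z => \sum_(i <- s) F i z).
Proof.
move=> hF; elim: s => [|a s IH].
  by under [fun z => _]funext => z do rewrite big_nil; exact: holo_cst.
under [fun z => _]funext => z do rewrite big_cons.
exact: holo_add.
Qed.

Lemma holo_prod (I : Type) (s : seq I) (F : I -> E -> C) :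
  (forall i, holo (F i)) -> holo (fun z => \prod_(i <- s) F i z).
Proof.
move=> hF; elim: s => [|a s IH].
  by under [fun z => _]funext => z do rewrite big_nil; exact: holo_cst.
under [fun z => _]funext => z do rewrite big_cons.
exact: holo_mul.
Qed.

Lemma holo_det m (F : 'I_m -> 'I_m -> E -> C) :
  (forall i j, holo (F i j)) -> holo (fun z => \det (\matrix_(i, j) F i j z)).
Proof.
move=> hF.
have -> : (fun z => \det (\matrix_(i, j) F i j z)) =
  (fun z => \sum_(s : 'S_m) ((-1) ^+ s * \prod_(i < m) F i (s i) z)).
  apply: funext => z; rewrite /determinant; apply: eq_bigr => s _.
  by congr (_ * _); apply: eq_bigr => i _; rewrite mxE.
apply: holo_sum => s; apply: holo_mul; first exact: holo_cst.
by apply: holo_prod.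
Qed.
End Holo.
End Gen.
Section Gen2.
Variable R : realType.
Local Notation C := R[i].
Variable E : normedModType C.
Variables (Y : set E) (y : E).
Local Notation holo := (@holo_germ R E y).
Local Notation ideal S := (@ideal_gen R E Y y S).

Lemma ig_holo S f : ideal S f -> holo f.
Proof. by case. Qed.

Lemma ig_germ S f g : holo f -> germ_eq Y y f g -> ideal S g -> ideal S f.
Proof.
move=> hf efg [_ [m [a [s [ha [hs egs]]]]]]; split => //.
exists m, a, s; split => //; split => //.
move: efg egs; rewrite /germ_eq; apply: filterS2 => z e1 e2 Yz.
by rewrite e1 // e2.
Qed.

Lemma ig0 S : ideal S (fun _ => 0).
Proof.
split; first exact: holo_cst.
exists 0%N, (fun _ _ => 0), (fun _ _ => 0); split; first by case.
split; first by case.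
by near=> z => _; rewrite big_ord0.
Unshelve. all: by end_near. Qed.

Lemma ig_gen S s : S s -> holo s -> ideal S s.
Proof.
move=> Ss hs; split => //.
exists 1%N, (fun _ _ => 1), (fun _ => s); split; first by move=> _; exact: holo_cst.
split; first by [].
by near=> z => _; rewrite big_ord1 mul1r.
Unshelve. all: by end_near. Qed.

Lemma igD S f g : ideal S f -> ideal S g -> ideal S (fun z => f z + g z).
Proof.
move=> [hf [m1 [a1 [s1 [ha1 [hs1 e1]]]]]] [hg [m2 [a2 [s2 [ha2 [hs2 e2]]]]]].
split; first exact: holo_add.
exists (m1 + m2)%N, (fun j => match fintype.split j with inl j1 => a1 j1 | inr j2 => a2 j2 end),
  (fun j => match fintype.split j with inl j1 => s1 j1 | inr j2 => s2 j2 end).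
split; first by move=> j; case: (fintype.split j).
split; first by move=> j; case: (fintype.split j).
move: e1 e2; rewrite /germ_eq; apply: filterS2 => z e1 e2 Yz.
rewrite big_split_ord /= e1 // e2 //.
congr (_ + _); apply: eq_bigr => j _; by rewrite ?splitL ?splitR.
Qed.

Lemma igM S a f : holo a -> ideal S f -> ideal S (fun z => a z * f z).
Proof.
move=> ha [hf [m [b [s [hb [hs e]]]]]].
split; first exact: holo_mul.
exists m, (fun j z => a z * b j z), s; split; first by move=> j; exact: holo_mul.
split => //.
move: e; rewrite /germ_eq; apply: filterS => z e Yz.
rewrite e // big_distrr; apply: eq_bigr => j _ /=; by rewrite mulrA.
Qed.

Lemma igB S f g : ideal S f -> ideal S g -> ideal S (fun z => f z - g z).
Proof.
move=> hf hg.
have := igD hf (igM (holo_cst y (-1)) hg).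
by under [fun z => _ + _]funext => z do rewrite mulN1r.
Qed.

Lemma ig_sum S (I : Type) (r : seq I) (F : I -> E -> C) :
  (forall i, ideal S (F i)) -> ideal S (fun z => \sum_(i <- r) F i z).
Proof.
move=> hF; elim: r => [|a r IH].
  by under [fun z => _]funext => z do rewrite big_nil; exact: ig0.
under [fun z => _]funext => z do rewrite big_cons.
exact: igD.
Qed.

Lemma ig_sub S S' : (forall s, S s -> ideal S' s) -> forall f, ideal S f -> ideal S' f.
Proof.
move=> hS f [hf [m [a [s [ha [hs e]]]]]].
apply: ig_germ (e) _ => //.
apply: ig_sum => j; apply: igM => //; exact: hS.
Qed.

Lemma ig_mul S1 S2 T f g :
  (forall s, S1 s -> holo s) ->
  (forall s t, S1 s -> S2 t -> ideal T (fun z => s z * t z)) ->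
  ideal S1 f -> ideal S2 g -> ideal T (fun z => f z * g z).
Proof.
move=> h1 hST [hf [m [a [s [ha [hs e]]]]]] hg.
have hsg : forall j, ideal T (fun z => s j z * g z).
  move=> j; case: hg => [hg [m2 [b [t [hb [ht e2]]]]]].
  apply: (@ig_germ _ _ (fun z => \sum_(l < m2) b l z * (s j z * t l z))
     (holo_mul (h1 _ (hs j)) hg)).
    move: e2; rewrite /germ_eq; apply: filterS => z e2 Yz.
    rewrite e2 // big_distrr; apply: eq_bigr => l _ /=.
    by rewrite mulrCA.
  apply: ig_sum => l; apply: (@igM _ (b l)) => //.
  exact: hST.
apply: (@ig_germ _ _ (fun z => \sum_(j < m) a j z * (s j z * g z))
     (holo_mul hf (ig_holo hg))).
  move: e; rewrite /germ_eq; apply: filterS => z e Yz.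
  rewrite e // big_distrl /=.
  by apply: eq_bigr => j _; rewrite mulrA.
by apply: ig_sum => j; apply: igM.
Qed.
End Gen2.
Section Gen3.
Variable R : realType.
Local Notation C := R[i].
Variable E : normedModType C.
Variables (Y : set E) (y : E).
Local Notation holo := (@holo_germ R E y).
Local Notation ideal S := (@ideal_gen R E Y y S).

Definition prodset (S : set (E -> C)) k : set (E -> C) :=
  [set h | exists s : 'I_k -> E -> C, (forall t, S (s t)) /\ h = (fun z => \prod_(t < k) s t z)].

Lemma pow_sub S k : (forall s, S s -> holo s) ->
  forall f, ideal_pow Y y (ideal S) k f -> ideal (prodset S k) f.
Proof.
move=> hS; elim: k => [|k IH] f.
  rewrite /ideal_pow /=; apply: ig_sub => s ->; apply: ig_gen; last exact: holo_cst.
  exists (fun _ _ => 1); split; first by case.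
  by apply: funext => z; rewrite big_ord0.
rewrite /ideal_pow /= -/(ideal_pow Y y (ideal S) k).
apply: ig_sub => h [f1 [g1 [hf1 [hg1 ->]]]].
apply: (@ig_mul _ _ _ _ S (prodset S k)) => //; last exact: IH.
move=> s t Ss [u [hu ->]].
apply: ig_gen; last by apply: holo_mul; [exact: hS | apply: holo_prod => i; exact: hS].
exists (fun i => match unlift ord0 i with None => s | Some i' => u i' end).
split; first by move=> i; case: (unlift ord0 i).
apply: funext => z; rewrite big_ord_recl /= unlift_none; congr (_ * _).
by apply: eq_bigr => i _; rewrite liftK.
Qed.
End Gen3.
Lemma det_expand (K : comRingType) m N (a : 'I_m -> 'I_N -> K)
    (B : 'I_m -> 'I_N -> 'I_m -> K) :
  \det (\matrix_(i, j) \sum_(l < N) a j l * B j l i) =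
  \sum_(f : {ffun 'I_m -> 'I_N}) (\prod_j a j (f j)) * \det (\matrix_(i, j) B j (f j) i).
Proof.
rewrite /determinant.
under eq_bigr => s _.
  rewrite (eq_bigr (fun i => \sum_(l < N) a (s i) l * B (s i) l i)); last first.
    by move=> i _; rewrite mxE.
  rewrite bigA_distr_bigA /= big_distrr /=.
  rewrite (reindex_inj (h := fun f : {ffun 'I_m -> 'I_N} => [ffun i => f (s i)])); last first.
    move=> f1 f2 /ffunP e; apply/ffunP => i.
    by have := e ((s^-1)%g i); rewrite !ffunE permKV.
  over.
rewrite exchange_big /=; apply: eq_bigr => f _.
rewrite big_distrr /=; apply: eq_bigr => s _.
rewrite big_split /= mulrCA; congr (_ * _).
  rewrite [RHS](reindex_inj (@perm_inj _ s)); apply: eq_bigr => i _; by rewrite ffunE.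
by congr (_ * _); apply: eq_bigr => i _; rewrite ffunE mxE.
Qed.
Section Gen4.
Variable R : realType.
Local Notation C := R[i].
Variable E : normedModType C.
Variables (Y : set E) (y : E).
Local Notation holo := (@holo_germ R E y).
Local Notation ideal S := (@ideal_gen R E Y y S).

Lemma minor_comb q m N (S : set ('I_q -> E -> C)) (r : 'I_m -> 'I_q)
    (al : 'I_m -> 'I_N -> E -> C) (s : 'I_m -> 'I_N -> 'I_q -> E -> C) :
  injective r -> (forall j l, holo (al j l)) -> (forall j l, S (s j l)) ->
  (forall j l i, holo (s j l i)) ->
  Jminors Y y m S (fun z => \det (\matrix_(i, j) \sum_(l < N) al j l z * s j l (r i) z)).
Proof.
move=> ri hal hS hs.
under [fun z => _]funext => z do rewrite (det_expand (fun j l => al j l z) (fun j l i => s j l (r i) z)).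
apply: ig_sum => f; apply: igM; first by apply: holo_prod.
apply: ig_gen; last by apply: holo_det.
by exists r, (fun j => s j (f j)); split.
Qed.
End Gen4.
Section Gen5.
Variable R : realType.
Local Notation C := R[i].
Variable E : normedModType C.

Lemma fstc : continuous (fst : E * E -> E).
Proof. move=> w. exact: cvg_fst. Qed.
Lemma sndc : continuous (snd : E * E -> E).
Proof. move=> w. exact: cvg_snd. Qed.
Lemma near_fst (P : E -> Prop) (x x' : E) :
  (\forall z \near x, P z) -> \forall w \near (x, x'), P w.1.
Proof. move=> hP. exact: (@fstc (x, x') _ hP). Qed.
Lemma near_snd (P : E -> Prop) (x x' : E) :
  (\forall z \near x', P z) -> \forall w \near (x, x'), P w.2.
Proof. move=> hP. exact: (@sndc (x, x') _ hP). Qed.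
Lemma hfst (x : E * E) : differentiable (fst : E * E -> E) x.
Proof. apply: linear_differentiable. exact: fstc. Qed.
Lemma hsnd (x : E * E) : differentiable (snd : E * E -> E) x.
Proof. apply: linear_differentiable. exact: sndc. Qed.

Lemma holo_fst (h : E -> C) (x x' : E) :
  holo_germ x h -> holo_germ (x, x') (fun w : E * E => h w.1).
Proof. move=> hh. rewrite /holo_germ.
move: (@near_fst _ x x' hh); apply: filterS => w hw.
exact: (@differentiable_comp _ _ _ _ fst (h : E -> C^o) w (hfst w)).
Qed.
Lemma holo_snd (h : E -> C) (x x' : E) :
  holo_germ x' h -> holo_germ (x, x') (fun w : E * E => h w.2).
Proof. move=> hh. rewrite /holo_germ.
move: (@near_snd _ x x' hh); apply: filterS => w hw.
exact: (@differentiable_comp _ _ _ _ snd (h : E -> C^o) w (hsnd w)).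
Qed.

Variables (Y : set E) (y : E).
Local Notation Y2 := [set w : E * E | Y w.1 /\ Y w.2].

Lemma germ_fst f g : germ_eq Y y f g ->
  germ_eq Y2 (y, y) (fun w => f w.1) (fun w => g w.1).
Proof. move=> e; move: (@near_fst _ y y e); apply: filterS => w h [Y1 _]; exact: h. Qed.
Lemma germ_snd f g : germ_eq Y y f g ->
  germ_eq Y2 (y, y) (fun w => f w.2) (fun w => g w.2).
Proof. move=> e; move: (@near_snd _ y y e); apply: filterS => w h [_ Y2]; exact: h. Qed.

Lemma ig_fst S f : ideal_gen Y y S f ->
  ideal_gen Y2 (y, y) [set (fun w : E * E => s w.1) | s in S] (fun w => f w.1).
Proof.
move=> [hf [m [a [s [ha [hs e]]]]]]; split; first exact: holo_fst.
exists m, (fun j w => a j w.1), (fun j w => s j w.1); split.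
  by move=> j; apply: holo_fst.
split; first by move=> j; exists (s j).
exact: (germ_fst e).
Qed.
Lemma ig_snd S f : ideal_gen Y y S f ->
  ideal_gen Y2 (y, y) [set (fun w : E * E => s w.2) | s in S] (fun w => f w.2).
Proof.
move=> [hf [m [a [s [ha [hs e]]]]]]; split; first exact: holo_snd.
exists m, (fun j w => a j w.2), (fun j w => s j w.2); split.
  by move=> j; apply: holo_snd.
split; first by move=> j; exists (s j).
exact: (germ_snd e).
Qed.
End Gen5.

Lemma det_cast (K : comNzRingType) N N' (e : N = N') (F : 'I_N' -> 'I_N' -> K) :
  \det (\matrix_(i, j) F (cast_ord e i) (cast_ord e j)) = \det (\matrix_(i, j) F i j).
Proof.
by case: N' / e F => F; congr (\det _); apply/matrixP => i j; rewrite !mxE !cast_ord_id.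
Qed.

Lemma det22 (K : comNzRingType) (A : 'M[K]_2) : \det A = A 0 0 * A 1 1 - A 0 1 * A 1 0.
Proof.
rewrite (expand_det_row _ 0) !big_ord_recl big_ord0 addr0 /cofactor !det_mx11 !mxE /=.
rewrite expr0 mul1r expr1 mulN1r mulrN.
by congr (_ * A _ _ - A _ _ * A _ _); apply: val_inj.
Qed.
Section Gen6.
Variable R : realType.
Local Notation C := R[i].
Variable E : normedModType C.

Lemma near_neq0 (y : E) (u : E -> C) : holo_germ y u -> u y != 0 ->
  \forall z \near y, u z != 0.
Proof.
move=> hu uy.
have du : differentiable (u : E -> C^o) y := nbhs_singleton hu.
have := @cvgr_neq0 _ (C^o) _ _ _ (u : E -> C^o) (u y) (differentiable_continuous du) uy.
by move=> H; exact: (H _).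
Qed.

Lemma principal_coef (Y : set E) (y : E) g0 F : ideal_gen Y y [set g0] F ->
  exists c, holo_germ y c /\ germ_eq Y y F (fun z => c z * g0 z).
Proof.
move=> [hF [m [a [s [ha [hs e]]]]]].
exists (fun z => \sum_(j < m) a j z); split; first exact: holo_sum.
move: e; apply: filterS => z e Yz; rewrite e // big_distrl /=.
by apply: eq_bigr => j _; rewrite (hs j).
Qed.

Lemma holo_div (y : E) (c u : E -> C) : holo_germ y c -> holo_germ y u ->
  (\forall z \near y, u z != 0) -> holo_germ y (fun z => c z / u z).
Proof.
move=> hc hu nz; move: hc hu nz; apply: filterS3 => z dc du nz.
apply: (@differentiableM _ _ (c : E -> C^o) (fun z => (u z)^-1)) => //.
exact: (@differentiableV _ _ (u : E -> C^o)).
Qed.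
End Gen6.
Lemma det_two (K : comNzRingType) N (A : 'M[K]_N) (u v : 'I_N) : u != v ->
  (forall s : 'S_N, s != 1%g -> s != tperm u v -> exists i, A i (s i) = 0) ->
  \det A = \prod_i A i i - \prod_i A i (tperm u v i).
Proof.
move=> uv hA.
have t1 : tperm u v != 1%g.
  apply/eqP => /permP /(_ u); rewrite tpermL perm1 => e; by rewrite e eqxx in uv.
rewrite /determinant (bigD1 1%g) //= (bigD1 (tperm u v)) /=; last by rewrite t1.
rewrite [X in _ + (_ + X)]big1 ?addr0; last first.
  move=> s /ssrbool.andP [s1 st]; have [i hi] := hA s s1 st.
  by rewrite (bigD1 i) //= hi mul0r mulr0.
rewrite odd_perm1 odd_tperm uv expr0 expr1 mul1r mulN1r.
by congr (_ - _); apply: eq_bigr => i _; rewrite perm1.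
Qed.

Section DetT.
Variable K : comNzRingType.
Variable k' : nat.
Local Notation k := k'.+1.
Variables (u1 v1 u2 v2 : 'rV[K]_k).
Hypothesis hu2 : forall a : 'I_k, a != ord0 -> u2 0 a = 0.
Let T := block_mx (diag_mx u1) (diag_mx v1) (diag_mx u2) (diag_mx v2).

Let idx (i : 'I_(k + k)) : 'I_k := match fintype.split i with inl a => a | inr a => a end.

Lemma T_idx i j : T i j != 0 -> idx j = idx i.
Proof.
rewrite /T /idx -(splitK i) -(splitK j).
case: (fintype.split i) => a; case: (fintype.split j) => b;
  rewrite /= ?block_mxEul ?block_mxEur ?block_mxEdl ?block_mxEdr ?splitL ?splitR mxE;
  by case: (eqVneq a b) => [->|_]; rewrite ?mulr0n ?eqxx.
Qed.

Lemma idx_cases j a : idx j = a -> j = lshift k a \/ j = rshift k a.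
Proof.
rewrite /idx => <-; case E: (fintype.split j) => [b|b]; rewrite -(splitK j) E /=; by [left|right].
Qed.

Lemma detT : \det T =
  u1 0 ord0 * v2 0 ord0 * \prod_(a < k') (u1 0 (lift ord0 a) * v2 0 (lift ord0 a)) -
  v1 0 ord0 * u2 0 ord0 * \prod_(a < k') (u1 0 (lift ord0 a) * v2 0 (lift ord0 a)).
Proof.
have luv : lshift k (ord0 : 'I_k) != rshift k ord0 by rewrite eq_lrshift.
rewrite (det_two luv); last first.
  move=> s s1 st.
  have [//|H] := pselect (exists i, T i (s i) = 0).
  have nz i : T i (s i) != 0 by apply/eqP => e; apply: H; exists i.
  have sR a : a != ord0 -> s (rshift k a) = rshift k a.
    move=> a0; have := T_idx (nz (rshift k a)); rewrite {2}/idx splitR.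
    case/idx_cases => // e.
    have := nz (rshift k a); rewrite e /T block_mxEdl mxE eqxx hu2 //.
    by rewrite mul0rn eqxx.
  have sL a : a != ord0 -> s (lshift k a) = lshift k a.
    move=> a0; have := T_idx (nz (lshift k a)); rewrite {2}/idx splitL.
    case/idx_cases => // e.
    have : s (rshift k a) = s (lshift k a) by rewrite sR // e.
    by move=> /perm_inj /eqP; rewrite eq_rlshift.
  have s0 := T_idx (nz (lshift k ord0)); rewrite {2}/idx splitL in s0.
  have s0' := T_idx (nz (rshift k ord0)); rewrite {2}/idx splitR in s0'.
  exfalso.
  case/idx_cases: s0 => e0.
  - case/idx_cases: s0' => e0'.
      have : s (rshift k ord0) = s (lshift k ord0) by rewrite e0 e0'.
      by move=> /perm_inj /eqP; rewrite eq_rlshift.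
    move/eqP: s1; apply; apply/permP => i; rewrite perm1 -(splitK i).
    case: (fintype.split i) => a /=; case: (eqVneq a ord0) => [->|a0] //;
      by [rewrite sL | rewrite sR].
  - case/idx_cases: s0' => e0'; last first.
      have : s (rshift k ord0) = s (lshift k ord0) by rewrite e0 e0'.
      by move=> /perm_inj /eqP; rewrite eq_rlshift.
    move/eqP: st; apply; apply/permP => i; rewrite -(splitK i).
    case: (fintype.split i) => a /=; case: (eqVneq a ord0) => [->|a0].
    + by rewrite e0 tpermL.
    + rewrite sL // tpermD //.
        by rewrite eq_lshift eq_sym.
      by rewrite eq_rlshift.
    + by rewrite e0' tpermR.
    + by rewrite sR // tpermD // eq_rshift eq_sym.
rewrite !big_split_ord /= !big_ord_recl tpermL tpermR /T.
have tl a : tperm (lshift k ord0) (rshift k ord0) (lshift k (lift ord0 a)) = lshift k (lift ord0 a).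
  by rewrite tpermD // ?eq_lshift ?eq_rlshift // eq_sym neq_lift.
have tr a : tperm (lshift k ord0) (rshift k ord0) (rshift k (lift ord0 a)) = rshift k (lift ord0 a).
  by rewrite tpermD // ?eq_rshift ?eq_lrshift // eq_sym neq_lift.
under [X in _ - _ * X * _]eq_bigr => a _ do rewrite tl.
under [X in _ - _ * (_ * X)]eq_bigr => a _ do rewrite tr.
rewrite !block_mxEul !block_mxEur !block_mxEdl !block_mxEdr !mxE !eqxx !mulr1n.
have Tl a : block_mx (diag_mx u1) (diag_mx v1) (diag_mx u2) (diag_mx v2)
   (lshift k a) (lshift k a) = u1 0 a by rewrite block_mxEul mxE eqxx mulr1n.
have Tr a : block_mx (diag_mx u1) (diag_mx v1) (diag_mx u2) (diag_mx v2)
   (rshift k a) (rshift k a) = v2 0 a by rewrite block_mxEdr mxE eqxx mulr1n.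
rewrite !(eq_bigr _ (fun a _ => Tl (lift ord0 a))) !(eq_bigr _ (fun a _ => Tr (lift ord0 a))).
rewrite !big_split /=.
rewrite -/k' ; ring.
Qed.
End DetT.
Section Conc.
Variable R : realType.
Local Notation C := R[i].
Variables (n p : nat) (X : set 'rV[C]_n) (x : 'rV[C]_n) (M : set ('I_p -> 'rV[C]_n -> C)).
Hypothesis hM : submodule X x M.
Local Notation V := ('rV[C]_n).

Definition mnr k (h : 'I_k -> 'I_p -> V -> C) (r : 'I_k -> 'I_p) (z : V) :=
  \det (\matrix_(i, j) h j (r i) z).

Lemma holo_coord (z0 : V) i : holo_germ z0 (fun z : V => z ord0 i).
Proof. near=> z; exact: differentiable_coord. Unshelve. all: by end_near. Qed.

Lemma holoM h : M h -> forall i, holo_germ x (h i).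
Proof. by case: hM => H _ _ _ _; apply: H. Qed.

Lemma MZ a h : holo_germ x a -> M h -> M (fun i z => a z * h i z).
Proof. by case: hM => _ _ _ H _; apply: H. Qed.

Lemma holo_double q (g : 'I_q -> V -> C) : (forall i, holo_germ x (g i)) -> forall i, holo_germ (x, x) (Defs.double g i).
Proof.
move=> hg i; rewrite /Defs.double; case: (fintype.split i) => a.
  exact: holo_fst.
exact: holo_snd.
Qed.

Lemma doubleL q (g : 'I_q -> V -> C) a w : Defs.double g (lshift q a) w = g a w.1.
Proof. by rewrite /Defs.double splitL. Qed.
Lemma doubleR q (g : 'I_q -> V -> C) a w : Defs.double g (rshift q a) w = g a w.2.
Proof. by rewrite /Defs.double splitR. Qed.

Definition e2k k : (2 * k = k + k)%N := etrans (mul2n k) (esym (addnn k)).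

Lemma inj_R0 k (r r' : 'I_k -> 'I_p) : injective r -> injective r' ->
  injective (fun i : 'I_(2 * k) => match fintype.split (cast_ord (e2k k) i) with
     inl a => lshift p (r a) | inr b => rshift p (r' b) end).
Proof.
move=> ri ri' i1 i2 /= E.
apply: (cast_ord_inj (eq_n := e2k k)).
rewrite -[cast_ord _ i1]splitK -[cast_ord _ i2]splitK.
move: E; case: (fintype.split (cast_ord _ i1)) => a1; case: (fintype.split (cast_ord _ i2)) => a2.
- by move/lshift_inj/ri => ->.
- by move/eqP; rewrite eq_lrshift.
- by move/eqP; rewrite eq_rlshift.
- by move/rshift_inj/ri' => ->.
Qed.

Lemma K3 k (io : 'I_k -> 'I_n) (h h' : 'I_k -> 'I_p -> V -> C) (r r' : 'I_k -> 'I_p) :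
  injective r -> injective r' -> (forall j, M (h j)) -> (forall j, M (h' j)) ->
  Jminors (setXX X) (x, x) (2 * k) (doubled M)
   (fun w => (\prod_(t < k) (w.1 ord0 (io t) - w.2 ord0 (io t))) * (mnr h r w.1 * mnr h' r' w.2)).
Proof.
move=> ri ri' hh hh'.
pose R0 (i : 'I_(k + k)) : 'I_(p + p) := match fintype.split i with
     inl a => lshift p (r a) | inr b => rshift p (r' b) end.
pose hz b := fun i (z : V) => z ord0 (io b) * h' b i z.
pose al (j : 'I_(k + k)) (l : 'I_2) (w : V * V) : C := match fintype.split j with
    inl _ => if val l == 0%N then 1 else 0
  | inr b => if val l == 0%N then w.1 ord0 (io b) else -1 end.
pose s (j : 'I_(k + k)) (l : 'I_2) : 'I_(p + p) -> V * V -> C := match fintype.split j with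
    inl a => Defs.double (h a)
  | inr b => if val l == 0%N then Defs.double (h' b) else Defs.double (hz b) end.
have hzM b : M (hz b) by apply: MZ => //; exact: holo_coord.
suff -> : (fun w : V * V => (\prod_(t < k) (w.1 ord0 (io t) - w.2 ord0 (io t))) *
              (mnr h r w.1 * mnr h' r' w.2)) =
  (fun w => \det (\matrix_(i, j) \sum_(l < 2) al (cast_ord (e2k k) j) l w *
                     s (cast_ord (e2k k) j) l (R0 (cast_ord (e2k k) i)) w)).
  apply: (@minor_comb R _ (setXX X) (x, x) (p + p) (2 * k) 2 (doubled M)
     (fun i => R0 (cast_ord (e2k k) i)) (fun j => al (cast_ord (e2k k) j))
     (fun j => s (cast_ord (e2k k) j))).
  - exact: inj_R0.
  - move=> j l; rewrite /al; case: (fintype.split (cast_ord (e2k k) j)) => b;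
      case: (\val l == 0%N);
      by [apply: holo_cst | apply: (@holo_fst _ _ (fun z : V => z ord0 (io b))); apply: holo_coord].
  - move=> j l; rewrite /s; case: (fintype.split (cast_ord (e2k k) j)) => b; last case: (\val l == 0%N).
    + by exists (h b).
    + by exists (h' b).
    + by exists (hz b).
  - move=> j l i; rewrite /s; case: (fintype.split (cast_ord (e2k k) j)) => b;
      [|case: (\val l == 0%N)]; apply: holo_double => i'; apply: holoM => //.
apply: funext => w.
rewrite (det_cast (e2k k) (fun i j => \sum_(l < 2) al j l w * s j l (R0 i) w)).
set A1 := \matrix_(i, j) h j (r i) w.1.
set A2 := \matrix_(i, j) h j (r' i) w.2.
set B2 := \matrix_(i, j) h' j (r' i) w.2.
set d := \row_(t < k) (w.1 ord0 (io t) - w.2 ord0 (io t)).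
have -> : (\matrix_(i, j) \sum_(l < 2) al j l w * s j l (R0 i) w) =
    block_mx A1 0 A2 (B2 *m diag_mx d).
  apply/matrixP => i j; rewrite mxE -(splitK i) -(splitK j).
  case: (fintype.split i) => a; case: (fintype.split j) => b;
    rewrite /= ?block_mxEul ?block_mxEur ?block_mxEdl ?block_mxEdr ?mul_mx_diag !mxE
      /al /s /R0 ?splitL ?splitR !big_ord_recl big_ord0 /= ?doubleL ?doubleR /hz /=.
  - by rewrite mul1r mul0r !addr0.
  - by rewrite mulN1r addr0 subrr.
  - by rewrite mul1r mul0r !addr0.
  - by rewrite mulN1r addr0 -mulrBl mulrC.
rewrite det_lblock det_mulmx det_diag /mnr -/A1 -/B2.
have -> : \prod_i d 0 i = \prod_(t < k) (w.1 ord0 (io t) - w.2 ord0 (io t)).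
  by apply: eq_bigr => t _; rewrite /d mxE.
by rewrite mulrC -mulrA.
Qed.

Definition Dset := [set (fun w : V * V => w.1 ord0 i - w.2 ord0 i) | i in [set: 'I_n]].

Definition minset (E : normedModType C) q m (S : set ('I_q -> E -> C)) : set (E -> C) :=
  [set d | exists (r : 'I_m -> 'I_q) (c : 'I_m -> 'I_q -> E -> C),
      [/\ injective r, forall j, S (c j) &
          d = (fun z => \det (\matrix_(i, j) c j (r i) z))]].

Lemma holo_diff i : holo_germ (x, x) (fun w : V * V => w.1 ord0 i - w.2 ord0 i).
Proof.
apply: holo_sub.
  exact: (@holo_fst _ _ (fun z : V => z ord0 i)) (holo_coord _ _).
exact: (@holo_snd _ _ (fun z : V => z ord0 i)) (holo_coord _ _).
Qed.

Lemma holo_Dset s : Dset s -> holo_germ (x, x) s.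
Proof. by move=> [i _ <-]; apply: holo_diff. Qed.

Lemma holo_minset k s : minset k M s -> holo_germ x s.
Proof.
move=> [r [c [_ hc ->]]]; apply: holo_det => i j; exact: holoM.
Qed.

Variable k : nat.

Definition S2 : set (V * V -> C) :=
  [set t | exists m m', minset k M m /\ minset k M m' /\ t = (fun w => m w.1 * m' w.2)].

Lemma A_pi pi t : prodset Dset k pi -> S2 t ->
  Jminors (setXX X) (x, x) (2 * k) (doubled M) (fun w => pi w * t w).
Proof.
move=> [s [hs ->]] [m [m' [[r [c [ri hc ->]]] [[r' [c' [ri' hc' ->]]] ->]]]].
have /fin_all_exists [io hio] : forall u, exists i, s u = (fun w : V * V => w.1 ord0 i - w.2 ord0 i).
  by move=> u; have [i _ <-] := hs u; exists i.
have := K3 io ri ri' hc hc'.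
congr (Jminors _ _ _ _); apply: funext => w /=; rewrite /mnr; congr (_ * _).
by apply: eq_bigr => u _; rewrite hio.
Qed.

Lemma Lprod F G : Jminors X x k M F -> Jminors X x k M G ->
  ideal_gen (setXX X) (x, x) S2 (fun w => F w.1 * G w.2).
Proof.
move=> hF hG.
apply: (@ig_mul _ _ _ _ [set (fun w : V * V => s w.1) | s in minset k M]
   [set (fun w : V * V => s w.2) | s in minset k M]).
- move=> s [m hm <-]. exact: (holo_fst _ (holo_minset hm)).
- move=> s t [m hm <-] [m' hm' <-]; apply: ig_gen; first by exists m, m'; split => //; split.
  exact: (holo_mul (holo_fst _ (holo_minset hm)) (holo_snd _ (holo_minset hm'))).
- exact: ig_fst hF.
- exact: ig_snd hG.
Qed.

Lemma J2_sub g : Jminors (setXX X) (x, x) 2 (doubled_ideal (Jminors X x k M)) g ->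
  ideal_gen (setXX X) (x, x) S2 g.
Proof.
apply: ig_sub => d [r [c [ri hc ->]]].
have /fin_all_exists [F hF] : forall j, exists F : V -> C,
    Jminors X x k M F /\ c j = Defs.double (fun _ : 'I_1 => F).
  by move=> j; have [F hF <-] := hc j; exists F.
have hr i : r i = lshift 1 ord0 \/ r i = rshift 1 ord0.
  rewrite -(splitK (r i)); case: (fintype.split (r i)) => a; rewrite (ord1 a) /=; by [left|right].
have hc0 := (hF 0).2; have hc1 := (hF 1).2.
have hF0 := (hF 0).1; have hF1 := (hF 1).1.
under [fun z => _]funext => w do rewrite det22 !mxE hc0 hc1.
case: (hr 0) => e0; case: (hr 1) => e1.
- by have := ri 0 1; rewrite e0 e1 => /(_ erefl) /(congr1 val).
- rewrite e0 e1; under [fun z => _]funext => w do rewrite !doubleL !doubleR.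
  exact: igB (Lprod hF0 hF1) (Lprod hF1 hF0).
- rewrite e0 e1; under [fun z => _]funext => w do rewrite !doubleL !doubleR.
  under [fun z => _]funext => w do rewrite [F 0 w.2 * _]mulrC [F 1 w.2 * _]mulrC.
  exact: igB (Lprod hF1 hF0) (Lprod hF0 hF1).
- by have := ri 0 1; rewrite e0 e1 => /(_ erefl) /(congr1 val).
Qed.

Lemma partA :
  ideal_mul (setXX X) (x, x)
     (ideal_pow (setXX X) (x, x) (I_Delta X x) k)
     (Jminors (setXX X) (x, x) 2 (doubled_ideal (Jminors X x k M)))
   `<=` Jminors (setXX X) (x, x) (2 * k) (doubled M).
Proof.
move=> f; apply: ig_sub => h [f1 [g1 [hf1 [hg1 ->]]]].
apply: (@ig_mul _ _ _ _ (prodset Dset k) S2).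
- move=> s [u [hu ->]]; apply: holo_prod => i; exact: holo_Dset.
- by move=> s t hs ht; apply: A_pi.
- by apply: pow_sub => //; exact: holo_Dset.
- exact: J2_sub.
Qed.

Lemma K4 k' (io : 'I_k' -> 'I_n) (h : 'I_k'.+1 -> 'I_p -> V -> C) (r : 'I_k'.+1 -> 'I_p)
    (al be : V -> C) :
  injective r -> (forall j, M (h j)) -> holo_germ x al -> holo_germ x be ->
  Jminors (setXX X) (x, x) (2 * k'.+1) (doubled M)
   (fun w => (\prod_(t < k') (w.1 ord0 (io t) - w.2 ord0 (io t))) *
      (mnr h r w.1 * mnr h r w.2 * (al w.1 * be w.2 - be w.1 * al w.2))).
Proof.
move=> ri hh hal hbe.
pose kk := k'.+1.
pose R0 (i : 'I_(kk + kk)) : 'I_(p + p) := match fintype.split i with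
     inl a => lshift p (r a) | inr b => rshift p (r b) end.
pose ha := fun i (z : V) => al z * h ord0 i z.
pose hb := fun i (z : V) => be z * h ord0 i z.
pose hz t := fun i (z : V) => z ord0 (io t) * h (lift ord0 t) i z.
pose cf (j : 'I_(kk + kk)) (l : 'I_2) (w : V * V) : C := match fintype.split j with
  | inl a => match unlift ord0 a with
             | None => if val l == 0%N then 1 else 0
             | Some t => if val l == 0%N then 1 else - w.2 ord0 (io t) end
  | inr a => if val l == 0%N then 1 else 0 end.
pose s (j : 'I_(kk + kk)) (l : 'I_2) : 'I_(p + p) -> V * V -> C := match fintype.split j with
  | inl a => match unlift ord0 a with
             | None => Defs.double ha
             | Some t => if val l == 0%N then Defs.double (hz t) else Defs.double (h a) end
  | inr a => match unlift ord0 a with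
             | None => Defs.double hb
             | Some t => Defs.double (h a) end end.
have haM : M ha by apply: MZ.
have hbM : M hb by apply: MZ.
have hzM t : M (hz t) by apply: MZ => //; exact: holo_coord.
have sM (j : 'I_(kk + kk)) (l : 'I_2) : M (match fintype.split j with
  | inl a => match unlift ord0 a with
             | None => ha
             | Some t => if val l == 0%N then hz t else h a end
  | inr a => match unlift ord0 a with
             | None => hb
             | Some t => h a end end).
  case: (fintype.split j) => a; case: (unlift ord0 a) => [t|] //.
  by case: (val l == 0%N).
suff -> : (fun w : V * V => (\prod_(t < k') (w.1 ord0 (io t) - w.2 ord0 (io t))) *
      (mnr h r w.1 * mnr h r w.2 * (al w.1 * be w.2 - be w.1 * al w.2))) =
  (fun w => \det (\matrix_(i, j) \sum_(l < 2) cf (cast_ord (e2k kk) j) l w *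
                     s (cast_ord (e2k kk) j) l (R0 (cast_ord (e2k kk) i)) w)).
  apply: (@minor_comb R _ (setXX X) (x, x) (p + p) (2 * kk) 2 (doubled M)
     (fun i => R0 (cast_ord (e2k kk) i)) (fun j => cf (cast_ord (e2k kk) j))
     (fun j => s (cast_ord (e2k kk) j))).
  - exact: inj_R0.
  - move=> j l; rewrite /cf; case: (fintype.split (cast_ord (e2k kk) j)) => a;
      [case: (unlift ord0 a) => [t|]|]; case: (\val l == 0%N);
      by [apply: holo_cst | apply: holo_opp; apply: (@holo_snd _ _ (fun z : V => z ord0 (io t))); apply: holo_coord].
  - move=> j l; have := sM (cast_ord (e2k kk) j) l.
    rewrite /s; case: (fintype.split (cast_ord (e2k kk) j)) => a;
      case: (unlift ord0 a) => [t|]; try case: (\val l == 0%N); by move=> H; econstructor; [exact: H | reflexivity].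
  - move=> j l i; have := sM (cast_ord (e2k kk) j) l.
    rewrite /s; case: (fintype.split (cast_ord (e2k kk) j)) => a;
      case: (unlift ord0 a) => [t|]; try case: (\val l == 0%N);
      move=> H; apply: holo_double => i'; exact: holoM.
apply: funext => w.
rewrite (det_cast (e2k kk) (fun i j => \sum_(l < 2) cf j l w * s j l (R0 i) w)).
pose u1 := \row_(a < kk) match unlift ord0 a with None => al w.1
   | Some t => w.1 ord0 (io t) - w.2 ord0 (io t) end.
pose v1 := \row_(a < kk) match unlift ord0 a with None => be w.1 | Some _ => 1 end.
pose u2 := \row_(a < kk) match unlift ord0 a with None => al w.2 | Some _ => 0 end.
pose v2 := \row_(a < kk) match unlift ord0 a with None => be w.2 | Some _ => 1 end.
have -> : (\matrix_(i, j) \sum_(l < 2) cf j l w * s j l (R0 i) w) =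
   block_mx (\matrix_(i, j) h j (r i) w.1) 0 0 (\matrix_(i, j) h j (r i) w.2) *m
   block_mx (diag_mx u1) (diag_mx v1) (diag_mx u2) (diag_mx v2).
  rewrite mulmx_block !mul0mx addr0 add0r !mul_mx_diag.
  apply/matrixP => i j; rewrite mxE -(splitK i) -(splitK j).
  case: (fintype.split i) => b; case: (fintype.split j) => a;
  rewrite /= ?block_mxEul ?block_mxEur ?block_mxEdl ?block_mxEdr !mxE /cf /s /R0 ?splitL ?splitR;
  case: (unliftP ord0 a) => [t ->|->]; rewrite ?liftK ?unlift_none !big_ord_recl big_ord0 /=
    ?doubleL ?doubleR /ha /hb /hz /=; ring.
have hu2 : forall a : 'I_kk, a != ord0 -> u2 0 a = 0.
  by move=> a; case: (unliftP ord0 a) => [t ->|->]; rewrite ?eqxx // mxE liftK.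
rewrite det_mulmx det_ublock (@detT _ _ u1 v1 u2 v2 hu2) /mnr !mxE !unlift_none.
have -> : \prod_(a < k') (u1 0 (lift ord0 a) * v2 0 (lift ord0 a)) =
    \prod_(t < k') (w.1 ord0 (io t) - w.2 ord0 (io t)).
  by apply: eq_bigr => t _; rewrite /u1 /v2 !mxE liftK mulr1.
ring.
Qed.

Section PartB.
Variable k' : nat.
Local Notation kk := k'.+1.
Local Notation J := (Jminors X x kk M).

Definition S2b : set (V * V -> C) :=
  [set t | exists (h : 'I_kk -> 'I_p -> V -> C) (r : 'I_kk -> 'I_p) (al be : V -> C),
    [/\ injective r, forall j, M (h j), holo_germ x al, holo_germ x be &
      t = (fun w => mnr h r w.1 * mnr h r w.2 * (al w.1 * be w.2 - be w.1 * al w.2))]].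

Hypothesis hP : principal_ideal X x J.

Lemma Gb F F' : J F -> J F' ->
  ideal_gen (setXX X) (x, x) S2b (fun w => F w.1 * F' w.2 - F' w.1 * F w.2).
Proof.
move=> hF hF'.
have [g0 [hg0 eJ]] := hP.
have coef : forall F0, J F0 -> exists c, holo_germ x c /\ germ_eq X x F0 (fun z => c z * g0 z).
  by move=> F0 hF0; apply: principal_coef; rewrite -eJ.
have Jg0 : J g0 by rewrite eJ; apply: ig_gen.
have holoF : holo_germ (x, x) (fun w : V * V => F w.1 * F' w.2 - F' w.1 * F w.2).
  apply: holo_sub; apply: holo_mul;
    by [exact: (holo_fst _ (ig_holo hF)) | exact: (holo_snd _ (ig_holo hF'))
       | exact: (holo_fst _ (ig_holo hF')) | exact: (holo_snd _ (ig_holo hF))].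
case: Jg0 => _ [m [e [s [he [hs eg]]]]].
have /fin_all_exists [u hu] : forall l, exists u, holo_germ x u /\
    germ_eq X x (s l) (fun z => u z * g0 z).
  by move=> l; apply: coef; apply: ig_gen => //; exact: holo_minset (hs l).
have [[l ul]|nul] := pselect (exists l, u l x != 0).
- have [r [h [ri hh es]]] := hs l.
  have [c [hc ec]] := coef F hF; have [c' [hc' ec']] := coef F' hF'.
  have unz := near_neq0 (hu l).1 ul.
  pose al := fun z => c z / u l z; pose be := fun z => c' z / u l z.
  have hal : holo_germ x al := holo_div hc (hu l).1 unz.
  have hbe : holo_germ x be := holo_div hc' (hu l).1 unz.
  have eF : \forall z \near (x : ('rV[C]_n : normedModType C)), X z -> F z = al z * mnr h r z.
    move: ec (hu l).2 unz; apply: filterS3 => z e1 e2 nz Xz.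
    have e2' : mnr h r z = u l z * g0 z by rewrite -e2 // es.
    by rewrite e1 // e2' /al mulrA divfK.
  have eF' : \forall z \near (x : ('rV[C]_n : normedModType C)), X z -> F' z = be z * mnr h r z.
    move: ec' (hu l).2 unz; apply: filterS3 => z e1 e2 nz Xz.
    have e2' : mnr h r z = u l z * g0 z by rewrite -e2 // es.
    by rewrite e1 // e2' /be mulrA divfK.
  apply: (@ig_germ _ _ _ _ _ _ (fun w => mnr h r w.1 * mnr h r w.2 * (al w.1 * be w.2 - be w.1 * al w.2)) holoF).
    move: (near_fst x eF) (near_snd x eF) (near_fst x eF') (near_snd x eF').
    apply: filterS4 => w e1 e2 e3 e4 [X1 X2].
    rewrite e1 // e2 // e3 // e4 //; ring.
  apply: ig_gen.
    by exists h, r, al, be; split.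
  have hm : holo_germ x (mnr h r) by apply: holo_minset; exists r, h.
  apply: holo_mul; first exact: (holo_mul (holo_fst _ hm) (holo_snd _ hm)).
  exact: (holo_sub (holo_mul (holo_fst _ hal) (holo_snd _ hbe))
                   (holo_mul (holo_fst _ hbe) (holo_snd _ hal))).
- pose sf := fun z => \sum_(l < m) e l z * u l z.
  have hsf : holo_germ x sf by apply: holo_sum => l; apply: holo_mul => //; exact: (hu l).1.
  have ul0 l : u l x = 0.
    by case: (eqVneq (u l x) 0) => // ne; exfalso; apply: nul; exists l.
  have sf0 : sf x - 1 != 0.
    rewrite /sf big1 ?sub0r ?oppr_eq0 ?oner_eq0 // => l _.
    by rewrite ul0 mulr0.
  have nz := near_neq0 (holo_sub hsf (holo_cst x 1)) sf0.
  have hall : \forall z \near (x : ('rV[C]_n : normedModType C)),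
      forall l, X z -> s l z = u l z * g0 z.
    exact: (filter_forall (nbhs_filter _) (fun l => (hu l).2)).
  have g00 : \forall z \near (x : ('rV[C]_n : normedModType C)), X z -> g0 z = 0.
    move: eg hall nz; apply: filterS3 => z e1 e2 nz Xz.
    have : g0 z * (sf z - 1) = 0.
      apply/eqP; rewrite mulrBr mulr1 subr_eq0; apply/eqP.
      rewrite {2}(e1 Xz) /sf big_distrr /=.
      by apply: eq_bigr => l _; rewrite (e2 l Xz); ring.
    by move/eqP; rewrite mulf_eq0 (negPf nz) orbF => /eqP.
  have [c [hc ec]] := coef F hF; have [c' [hc' ec']] := coef F' hF'.
  have eF : \forall z \near (x : ('rV[C]_n : normedModType C)), X z -> F z = 0.
    by move: ec g00; apply: filterS2 => z e1 e2 Xz; rewrite e1 // e2 // mulr0.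
  have eF' : \forall z \near (x : ('rV[C]_n : normedModType C)), X z -> F' z = 0.
    by move: ec' g00; apply: filterS2 => z e1 e2 Xz; rewrite e1 // e2 // mulr0.
  apply: (@ig_germ _ _ _ _ _ _ (fun _ => 0) holoF); last exact: ig0.
  move: (near_fst x eF) (near_snd x eF) (near_fst x eF') (near_snd x eF').
  apply: filterS4 => w e1 e2 e3 e4 [X1 X2].
  by rewrite e1 // e2 // e3 // e4 // !mulr0 subrr.
Qed.

Lemma J2b_sub g : Jminors (setXX X) (x, x) 2 (doubled_ideal J) g ->
  ideal_gen (setXX X) (x, x) S2b g.
Proof.
apply: ig_sub => d [r [c [ri hc ->]]].
have /fin_all_exists [F hF] : forall j, exists F : V -> C,
    J F /\ c j = Defs.double (fun _ : 'I_1 => F).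
  by move=> j; have [F hF <-] := hc j; exists F.
have hr i : r i = lshift 1 ord0 \/ r i = rshift 1 ord0.
  rewrite -(splitK (r i)); case: (fintype.split (r i)) => a; rewrite (ord1 a) /=; by [left|right].
have hc0 := (hF 0).2; have hc1 := (hF 1).2.
have hF0 := (hF 0).1; have hF1 := (hF 1).1.
under [fun z => _]funext => w do rewrite det22 !mxE hc0 hc1.
case: (hr 0) => e0; case: (hr 1) => e1.
- by have := ri 0 1; rewrite e0 e1 => /(_ erefl) /(congr1 val).
- rewrite e0 e1; under [fun z => _]funext => w do rewrite !doubleL !doubleR.
  exact: Gb hF0 hF1.
- rewrite e0 e1; under [fun z => _]funext => w do rewrite !doubleL !doubleR.
  under [fun z => _]funext => w do rewrite [F 0 w.2 * _]mulrC [F 1 w.2 * _]mulrC.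
  exact: Gb hF1 hF0.
- by have := ri 0 1; rewrite e0 e1 => /(_ erefl) /(congr1 val).
Qed.

Lemma B_pi pi t : prodset Dset k' pi -> S2b t ->
  Jminors (setXX X) (x, x) (2 * kk) (doubled M) (fun w => pi w * t w).
Proof.
move=> [s [hs ->]] [h [r [al [be [ri hh hal hbe ->]]]]].
have /fin_all_exists [io hio] : forall u, exists i, s u = (fun w : V * V => w.1 ord0 i - w.2 ord0 i).
  by move=> u; have [i _ <-] := hs u; exists i.
have := K4 io ri hh hal hbe.
congr (Jminors _ _ _ _); apply: funext => w /=; congr (_ * _).
by apply: eq_bigr => u _; rewrite hio.
Qed.

Lemma partB :
   ideal_mul (setXX X) (x, x)
     (ideal_pow (setXX X) (x, x) (I_Delta X x) k')
     (Jminors (setXX X) (x, x) 2 (doubled_ideal J))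
   `<=` Jminors (setXX X) (x, x) (2 * kk) (doubled M).
Proof.
move=> f; apply: ig_sub => h [f1 [g1 [hf1 [hg1 ->]]]].
apply: (@ig_mul _ _ _ _ (prodset Dset k') S2b).
- move=> s [u [hu ->]]; apply: holo_prod => i; exact: holo_Dset.
- by move=> s t hs ht; apply: B_pi.
- by apply: pow_sub => //; exact: holo_Dset.
- exact: J2b_sub.
Qed.
End PartB.
End Conc.

Theorem lemmaL4p20 (R : realType) (n p k : nat) (X : set 'rV[R[i]]_n)
    (x : 'rV[R[i]]_n) (M : set ('I_p -> 'rV[R[i]]_n -> R[i])) :
  analytic_set X -> X x -> submodule X x M ->
  (ideal_mul (setXX X) (x, x)
     (ideal_pow (setXX X) (x, x) (I_Delta X x) k)
     (Jminors (setXX X) (x, x) 2 (doubled_ideal (Jminors X x k M)))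
   `<=` Jminors (setXX X) (x, x) (2 * k) (doubled M)) /\
  (principal_ideal X x (Jminors X x k M) ->
   ideal_mul (setXX X) (x, x)
     (ideal_pow (setXX X) (x, x) (I_Delta X x) k.-1)
     (Jminors (setXX X) (x, x) 2 (doubled_ideal (Jminors X x k M)))
   `<=` Jminors (setXX X) (x, x) (2 * k) (doubled M)).
Proof.
move=> _ _ hM; split; first exact: partA.
case: k => [|k'] hP; first exact: (@partA _ _ _ _ _ _ hM 0).
exact: partB.
Qed.
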